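(* Fix $k\in\mathbb{N}$ and let $Q$ be a class of $k$-degenerate graphs (closed under isomorphism). Then $P_Q$ is weakly distinguishing.
   Context: All graphs are finite and simple. A graph is $k$-degenerate if every induced subgraph has a vertex of degree at most $k$. For a class $Q$, $P_Q(G;X)=\sum_{A\subseteq V(G):\, G[A]\in Q}X^{|A|}$, where $G[A]$ is the induced subgraph on $A$. A graph $G$ is $P$-unique if every graph $H$ with $P(G)=P(H)$ is isomorphic to $G$. With $\mathcal{G}(n)$ the set of isomorphism classes of graphs on $n$ vertices and $U_P(n)$ the $P$-unique graphs in $\mathcal{G}(n)$, $P$ is weakly distinguishing if $\lim_{n\to\infty}|U_P(n)|/|\mathcal{G}(n)|=0$. *)

(* Defs.v *)
From mathcomp Require Import all_boot all_order all_algebra.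
From mathcomp Require Import fingroup perm boolp.
Set Implicit Arguments. Unset Strict Implicit. Unset Printing Implicit Defensive.
Import GRing.Theory Num.Theory.

Definition is_graph (T : finType) (e : rel T) : Prop :=
  symmetric e /\ irreflexive e.

Definition graph_iso (T1 T2 : finType) (e1 : rel T1) (e2 : rel T2) : Prop :=
  exists f : T1 -> T2, bijective f /\ forall x y, e2 (f x) (f y) = e1 x y.

Definition graph_class := forall T : finType, rel T -> bool.

Definition iso_closed (Q : graph_class) : Prop :=
  forall (T1 T2 : finType) (e1 : rel T1) (e2 : rel T2),
    is_graph e1 -> is_graph e2 -> graph_iso e1 e2 -> Q T1 e1 = Q T2 e2.

Definition induced (T : finType) (e : rel T) (A : {set T}) :
  rel {x : T | x \in A} := fun x y => e (val x) (val y).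

Definition degenerate (k : nat) (T : finType) (e : rel T) : Prop :=
  forall A : {set T}, A != set0 ->
    exists2 x, x \in A & #|[set y in A | e x y]| <= k.

Definition PQ (Q : graph_class) (T : finType) (e : rel T) : {poly int} :=
  (\sum_(A : {set T} | Q _ (@induced T e A)) 'X^#|A|)%R.

Definition PQ_unique (Q : graph_class) (T : finType) (e : rel T) : Prop :=
  forall (T' : finType) (e' : rel T'), is_graph e' ->
    PQ Q e' = PQ Q e -> graph_iso e' e.

Definition lgraph (n : nat) := {ffun 'I_n * 'I_n -> bool}.
Definition lrel (n : nat) (g : lgraph n) : rel 'I_n := fun x y => g (x, y).
Definition graphs (n : nat) : {set lgraph n} :=
  [set g : lgraph n | [forall x, forall y, g (x, y) == g (y, x)]
                      && [forall x, ~~ g (x, x)]].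
Definition liso (n : nat) (g h : lgraph n) : bool :=
  [exists p : {perm 'I_n}, [forall x, forall y, h (p x, p y) == g (x, y)]].

Definition iso_classes (n : nat) : {set {set lgraph n}} :=
  [set [set h in graphs n | liso g h] | g in graphs n].

Definition unique_classes (Q : graph_class) (n : nat) : {set {set lgraph n}} :=
  [set C in iso_classes n |
     `[< exists2 g, g \in C & PQ_unique Q (lrel g) >]].

Definition weakly_distinguishing (Q : graph_class) : Prop :=
  forall eps : rat, (0 < eps)%R -> exists N : nat, forall n, N <= n ->
    ((#|unique_classes Q n|%:R / #|iso_classes n|%:R) < eps)%R.

(* Main.v *)
Require Import Defs.
From mathcomp Require Import all_boot all_order all_algebra.
From mathcomp Require Import fingroup perm boolp.
From mathcomp Require Import zify.
Set Implicit Arguments. Unset Strict Implicit. Unset Printing Implicit Defensive.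
Import Order.TTheory GRing.Theory Num.Theory.
From mathcomp Require Import lra.

Lemma liso_refl n (g : lgraph n) : liso g g.
Proof. by apply/existsP; exists 1%g; apply/forallP=> x; apply/forallP=> y; rewrite !perm1. Qed.

Lemma liso_sym n (g h : lgraph n) : liso g h -> liso h g.
Proof.
case/existsP=> p /forallP H; apply/existsP; exists (p^-1)%g.
apply/forallP=> x; apply/forallP=> y.
by have /forallP/(_ ((p^-1)%g y))/eqP <- := H ((p^-1)%g x); rewrite !permKV.
Qed.

Lemma liso_trans n (g h l : lgraph n) : liso g h -> liso h l -> liso g l.
Proof.
case/existsP=> p /forallP H1; case/existsP=> q /forallP H2.
apply/existsP; exists (p * q)%g; apply/forallP=> x; apply/forallP=> y.
rewrite !permM.
have /forallP/(_ (p y))/eqP -> := H2 (p x).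
by have /forallP/(_ y) := H1 x.
Qed.

Definition cls n (g : lgraph n) := [set h in graphs n | liso g h].

Lemma cls_eq n (g h : lgraph n) : liso g h -> cls g = cls h.
Proof.
move=> gh; apply/setP=> l; rewrite !inE; apply: andb_id2l => _.
apply/idP/idP=> H; first exact: liso_trans (liso_sym gh) H.
exact: liso_trans gh H.
Qed.

Lemma cls_card n (g : lgraph n) : #|cls g| <= n`!.
Proof.
pose f (p : {perm 'I_n}) : lgraph n := [ffun xy => g ((p^-1)%g xy.1, (p^-1)%g xy.2)].
have sub : cls g \subset f @: [set: {perm 'I_n}].
  apply/subsetP=> h; rewrite inE => /andP[_ /existsP[p /forallP H]].
  apply/imsetP; exists p; first by rewrite inE.
  apply/ffunP=> [[x y]]; rewrite ffunE /=.
  by have /forallP/(_ ((p^-1)%g y))/eqP <- := H ((p^-1)%g x); rewrite !permKV.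
apply: leq_trans (subset_leq_card sub) _.
by apply: leq_trans (leq_imset_card _ _) _; rewrite cardsT card_Sn.
Qed.

Lemma mem_cls n (g : lgraph n) : g \in graphs n -> g \in cls g.
Proof. by move=> gG; rewrite inE gG liso_refl. Qed.

Lemma graphs_le n : #|graphs n| <= n`! * #|iso_classes n|.
Proof.
rewrite -sum1_card.
rewrite (partition_big (@cls n) (mem (iso_classes n))); last first.
  by move=> g gG; apply/imsetP; exists g.
rewrite mulnC -sum_nat_const; apply: leq_sum => C /imsetP[g0 g0G CE].
rewrite sum1_card; apply: leq_trans (cls_card g0).
have -> : cls g0 = C by rewrite CE.
apply: subset_leq_card; apply/subsetP=> g /andP[gG /eqP <-].
exact: mem_cls.
Qed.
Lemma indep_deg (T : finType) (e : rel T) k : symmetric e -> irreflexive e ->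
  degenerate k e -> forall A : {set T}, exists I : {set T},
  [/\ I \subset A, {in I &, forall x y, ~~ e x y} & #|A| <= #|I| * k.+1].
Proof.
move=> sym irr deg A.
have [c] := ubnP #|A|; elim: c A => // c IH A Ac.
have [->|A0] := eqVneq A set0.
  by exists set0; split; rewrite ?sub0set ?cards0 //; move=> x y; rewrite inE.
have [x xA Nk] := deg A A0.
set N := [set y in A | e x y] in Nk.
set A' := A :\: (x |: N).
have A'A : A' \subset A by apply: subsetDl.
have xA' : x \notin A' by rewrite !inE eqxx.
have A'c : #|A'| < c.
  have : #|A'| < #|A|.
    by apply: proper_card; apply/properP; split => //; exists x.
  move: Ac; lia.
have [I' [I'A' I'ind I'c]] := IH A' A'c.
have xI' : x \notin I' by apply: contra xA'; apply: (subsetP I'A').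
exists (x |: I'); split.
- by rewrite subUset sub1set xA (subset_trans I'A' A'A).
- have Hx : forall v, v \in I' -> ~~ e x v.
    move=> v /(subsetP I'A'); rewrite !inE negb_or => /andP[/andP[_ vN] vA].
    by move: vN; rewrite vA.
  move=> u v; rewrite !inE => /orP[/eqP->|uI] /orP[/eqP->|vI].
  + by rewrite irr.
  + exact: Hx.
  + by rewrite sym; apply: Hx.
  + exact: I'ind.
- rewrite cardsU1 xI' mulSn.
  rewrite -(cardsID (x |: N) A) -/A'.
  apply: leq_add => //.
  apply: leq_trans (subset_leq_card (subsetIr _ _)) _.
  by rewrite cardsU1; case: (x \notin N) => //; apply: leq_trans Nk _.
Qed.
Definition indep n (B : {set 'I_n}) : {set lgraph n} :=
  [set g in graphs n | [forall x in B, forall y in B, ~~ g (x, y)]].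

Definition pairs_in n (B : {set 'I_n}) (A : {set 'I_n}) : bool := (A \subset B) && (#|A| == 2).
Notation SA B := ({A | pairs_in B A}).
Definition Phi_dummy := 0.

Definition Phi n (B : {set 'I_n}) (gf : lgraph n * {ffun SA B -> bool}) : lgraph n :=
  [ffun xy => if (insub [set xy.1; xy.2] : option (SA B)) is Some a then gf.2 a else gf.1 xy].

Lemma graphsP n (g : lgraph n) :
  reflect ((forall x y, g (x, y) = g (y, x)) /\ (forall x, g (x, x) = false)) (g \in graphs n).
Proof.
rewrite inE; apply: (iffP andP) => [[/forallP H1 /forallP H2]|[H1 H2]]; split.
- by move=> x y; apply/eqP; have /forallP := H1 x; apply.
- by move=> x; apply/negbTE/H2.
- by apply/forallP=> x; apply/forallP=> y; rewrite H1.
- by apply/forallP=> x; rewrite H2.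
Qed.

Lemma indepE n (B : {set 'I_n}) g : (g \in indep B) =
  (g \in graphs n) && [forall x in B, forall y in B, ~~ g (x, y)].
Proof. by rewrite [in LHS]inE. Qed.

Lemma card_SA n (B : {set 'I_n}) : #|{: SA B}| = 'C(#|B|, 2).
Proof. rewrite card_sig -cards_draws. apply: eq_card => A. by rewrite inE. Qed.

Lemma indep_card n (B : {set 'I_n}) : #|indep B| * 2 ^ 'C(#|B|, 2) <= #|graphs n|.
Proof.
have -> : #|indep B| * 2 ^ 'C(#|B|, 2) = #|setX (indep B) [set: {ffun SA B -> bool}]|.
  by rewrite cardsX cardsT card_ffun card_bool card_SA.
rewrite -(@card_in_imset _ _ (@Phi n B)); last first.
  move=> [g1 f1] [g2 f2]; rewrite !in_setX !in_setT /= !andbT !indepE.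
  move=> /andP[/graphsP[_ g1i] /forall_inP I1] /andP[/graphsP[_ g2i] /forall_inP I2] E.
  have PE : forall g f x y, Phi (g, f) (x, y) =
      if (insub [set x; y] : option (SA B)) is Some a then f a else g (x, y).
    by move=> g f x y; rewrite ffunE.
  congr pair.
  + apply/ffunP=> [[x y]].
    have := congr1 (fun h : lgraph n => h (x, y)) E; rewrite !PE.
    case: insubP => [u /andP[sB _] _ _|_ //].
    have xB : x \in B by apply: (subsetP sB); rewrite !inE eqxx.
    have yB : y \in B by apply: (subsetP sB); rewrite !inE eqxx orbT.
    have /forall_inP/(_ y yB)/negbTE -> := I1 x xB.
    by have /forall_inP/(_ y yB)/negbTE -> := I2 x xB.
  + apply/ffunP=> a.
    have /andP[_ /cards2P[x [y [xy ax]]]] := valP a.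
    have := congr1 (fun h : lgraph n => h (x, y)) E; rewrite !PE.
    case: insubP => [u _ uv|]; last by rewrite -ax valP.
    by have -> : u = a by apply: val_inj; rewrite uv ax.
apply: subset_leq_card; apply/subsetP=> h /imsetP[[g f]]; rewrite !in_setX !in_setT /= andbT indepE.
move=> /andP[/graphsP[gs gi] _] ->; apply/graphsP; split.
- move=> x y; rewrite !ffunE /= setUC.
  case: insubP => [u _ _|_]; first by [].
  by rewrite gs.
- move=> x; rewrite ffunE /=.
  case: insubP => [u /andP[_] |_]; last by rewrite gi.
  by rewrite setUid cards1.
Qed.

Lemma graphs_lb n : 2 ^ 'C(n, 2) <= #|graphs n|.
Proof.
apply: leq_trans (indep_card [set: 'I_n]); rewrite cardsT card_ord.
rewrite leq_pmull // card_gt0; apply/set0Pn; exists [ffun => false].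
rewrite indepE; apply/andP; split.
  by apply/graphsP; split => *; rewrite !ffunE.
by apply/forall_inP=> x _; apply/forall_inP=> y _; rewrite ffunE.
Qed.
Definition cnt (Q : graph_class) n (g : lgraph n) j :=
  #|[set A : {set 'I_n} | Q _ (@induced _ (lrel g) A) && (#|A| == j)]|.

Lemma PQ_coef Q n (g : lgraph n) j : ((PQ Q (lrel g))`_j = (cnt Q g j)%:R)%R.
Proof.
rewrite /PQ coef_sum.
under eq_bigr do rewrite coefXn.
rewrite -natr_sum; congr (_%:R)%R.
rewrite /cnt -sum1_card big_mkcond [RHS]big_mkcond /=.
apply: eq_bigr => A _; rewrite inE eq_sym.
by case: (Q _ _); case: (_ == _).
Qed.

Definition Bad (Q : graph_class) n m : {set lgraph n} :=
  [set g in graphs n | [exists A : {set 'I_n}, (m <= #|A|) && Q _ (@induced _ (lrel g) A)]].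

Lemma BadE Q n m g : (g \in Bad Q n m) =
  (g \in graphs n) && [exists A : {set 'I_n}, (m <= #|A|) && Q _ (@induced _ (lrel g) A)].
Proof. by rewrite [in LHS]inE. Qed.

Lemma card_sets n : #|{: {set 'I_n}}| = 2 ^ n.
Proof. by rewrite -cardsT -powersetT card_powerset cardsT card_ord. Qed.

Lemma cnt_le Q n (g : lgraph n) j : cnt Q g j <= 2 ^ n.
Proof. by rewrite -card_sets; apply: max_card. Qed.

Lemma cnt_ltS Q n (g : lgraph n) j : cnt Q g j < (2 ^ n).+1.
Proof. by rewrite ltnS cnt_le. Qed.

Lemma cnt_good Q n m (g : lgraph n) j : g \in graphs n -> g \notin Bad Q n m ->
  m <= j -> cnt Q g j = 0.
Proof.
move=> gG gB mj; apply/eqP; rewrite cards_eq0; apply/eqP/setP => A.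
rewrite !inE; apply/negP => /andP[QA /eqP cA].
move: gB; rewrite BadE gG /=; apply/negP; rewrite negbK.
by apply/existsP; exists A; rewrite cA mj.
Qed.

Definition code Q n m (g : lgraph n) : {ffun 'I_m -> 'I_(2 ^ n).+1} :=
  [ffun j : 'I_m => inord (cnt Q g j)].

Lemma code_PQ Q n m (g1 g2 : lgraph n) : g1 \in graphs n -> g2 \in graphs n ->
  g1 \notin Bad Q n m -> g2 \notin Bad Q n m -> code Q m g1 = code Q m g2 ->
  PQ Q (lrel g1) = PQ Q (lrel g2).
Proof.
move=> g1G g2G g1B g2B E; apply/polyP => j; rewrite !PQ_coef; congr (_%:R)%R.
case: (ltnP j m) => jm.
  have := congr1 (fun c : {ffun 'I_m -> 'I_(2 ^ n).+1} => val (c (Ordinal jm))) E; rewrite !ffunE /=.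
  by rewrite (inordK (cnt_ltS Q g1 j)) (inordK (cnt_ltS Q g2 j)).
by rewrite (cnt_good g1G g1B jm) (cnt_good g2G g2B jm).
Qed.

Lemma lrel_graph n (g : lgraph n) : g \in graphs n -> is_graph (lrel g).
Proof. by move=> /graphsP[gs gi]; split => [x y|x]; rewrite /lrel; [apply: gs|apply: gi]. Qed.

Lemma iso_liso n (g1 g2 : lgraph n) : graph_iso (lrel g1) (lrel g2) -> liso g1 g2.
Proof.
move=> [f [fb H]]; apply/existsP; exists (perm (bij_inj fb)).
by apply/forallP=> x; apply/forallP=> y; rewrite !permE; apply/eqP; apply: H.
Qed.

Lemma classes_cls n (C : {set lgraph n}) g : C \in iso_classes n -> g \in C -> C = cls g.
Proof.
move=> /imsetP[g0 _ ->] gC.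
have : g \in cls g0 by [].
rewrite /cls inE => /andP[_ H].
exact: (cls_eq H).
Qed.

Lemma card_im_factor (A B C : finType) (x0 : A) (D : {set A}) (f : A -> B) (h : A -> C) :
  {in D &, forall x y, f x = f y -> h x = h y} -> #|h @: D| <= #|f @: D|.
Proof.
move=> fh.
pose phi z := h (odflt x0 [pick x in D | f x == z]).
suff sub : h @: D \subset phi @: (f @: D).
  exact: leq_trans (subset_leq_card sub) (leq_imset_card _ _).
apply/subsetP=> c /imsetP[x xD ->]; apply/imsetP; exists (f x); first exact: imset_f.
rewrite /phi; case: pickP => [y /andP[yD /eqP fy]|/(_ x)]; last by rewrite xD eqxx.
by rewrite /= (fh x y xD yD).
Qed.

Lemma unique_le Q n m : #|unique_classes Q n| <= #|Bad Q n m| + (2 ^ n).+1 ^ m.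
Proof.
set U := unique_classes Q n.
set X := [set C : {set lgraph n} | [exists g in C, g \in Bad Q n m]].
rewrite -(cardsID X U); apply: leq_add.
  apply: leq_trans (leq_imset_card (@cls n) (Bad Q n m)).
  apply: subset_leq_card; apply/subsetP=> C /setIP[CU CX].
  move: CX; rewrite inE => /exists_inP[g gC gB].
  move: CU; rewrite inE => /andP[CI _].
  by apply/imsetP; exists g => //; apply: classes_cls.
set Good := [set g in graphs n | (g \notin Bad Q n m) && `[< PQ_unique Q (lrel g) >]].
apply: (@leq_trans #|(@cls n) @: Good|).
  apply: subset_leq_card; apply/subsetP=> C /setDP[CU CX].
  move: CU; rewrite inE => /andP[CI /asboolP[g gC gU]].
  have CE := classes_cls CI gC.
  have gG : g \in graphs n by move: gC; rewrite CE inE => /andP[].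
  apply/imsetP; exists g => //.
  rewrite inE gG /=; apply/andP; split; last exact/asboolP.
  apply: contra CX => gB; rewrite inE; apply/existsP; exists g; exact/andP.
apply: leq_trans (card_im_factor [ffun=> false] (f := code Q m) _) _.
  move=> g1 g2 /setIdP[g1G /andP[g1B _]] /setIdP[g2G /andP[g2B /asboolP g2U]] E.
  apply: cls_eq; apply: iso_liso; apply: g2U; first exact: lrel_graph.
  exact: code_PQ E.
apply: leq_trans (max_card _) _.
by rewrite card_ffun card_ord card_ord.
Qed.

Lemma induced_graph n (g : lgraph n) (A : {set 'I_n}) :
  g \in graphs n -> is_graph (@induced _ (lrel g) A).
Proof.
move=> /lrel_graph [gs gi]; split => [x y|x]; rewrite /induced; [apply: gs|apply: gi].
Qed.

Lemma bad_indep (Q : graph_class) k n m s (g : lgraph n) :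
  (forall (T : finType) (e : rel T), is_graph e -> Q T e -> degenerate k e) ->
  s * k.+1 <= m -> g \in Bad Q n m ->
  exists2 B : {set 'I_n}, s <= #|B| & g \in indep B.
Proof.
move=> HQ sm; rewrite BadE => /andP[gG /existsP[A /andP[mA QA]]].
have [es ei] := induced_graph A gG.
have dg := HQ _ _ (induced_graph A gG) QA.
have [I [_ Iind Ic]] := indep_deg es ei dg [set: {x | x \in A}].
exists [set val x | x in I].
  rewrite card_imset; last exact: val_inj.
  rewrite -(leq_pmul2r (ltn0Sn k)); apply: leq_trans sm _; apply: leq_trans mA _.
  apply: leq_trans Ic; rewrite cardsT card_sig.
  by apply: eq_leq; apply: eq_card => x; rewrite inE.
rewrite indepE gG; apply/forall_inP=> x /imsetP[x' x'I ->].
apply/forall_inP=> y /imsetP[y' y'I ->].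
exact: Iind.
Qed.

Lemma card_bigcup_le (I T : finType) (P : pred I) (F : I -> {set T}) :
  #|\bigcup_(i | P i) F i| <= \sum_(i | P i) #|F i|.
Proof.
elim/big_rec2: _ => [|i U s Pi IH]; first by rewrite cards0.
rewrite cardsU; apply: leq_trans (leq_subr _ _) _.
by rewrite leq_add2l.
Qed.

Lemma bad_le (Q : graph_class) k n m s :
  (forall (T : finType) (e : rel T), is_graph e -> Q T e -> degenerate k e) ->
  s * k.+1 <= m ->
  #|Bad Q n m| * 2 ^ 'C(s, 2) <= 2 ^ n * #|graphs n|.
Proof.
move=> HQ sm.
have sub : Bad Q n m \subset \bigcup_(B : {set 'I_n} | s <= #|B|) indep B.
  apply/subsetP=> g gB; have [B sB gI] := bad_indep HQ sm gB.
  by apply/bigcupP; exists B.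
apply: leq_trans (leq_mul (leq_trans (subset_leq_card sub) (card_bigcup_le _ _)) (leqnn _)) _.
rewrite big_distrl /=.
apply: leq_trans (_ : \sum_(B : {set 'I_n} | s <= #|B|) #|graphs n| <= _).
  apply: leq_sum => B sB; apply: leq_trans (indep_card B).
  by rewrite leq_mul2l leq_pexp2l // ?leq_bin2l // orbT.
rewrite -card_sets -sum_nat_const big_mkcond /=; apply: leq_sum => B _.
by case: ifP.
Qed.

Lemma bin2_mul x : 'C(x, 2) * 2 = x * x.-1.
Proof.
elim: x => [|x IH] //=; rewrite binS bin1 mulnDl IH; case: x {IH} => //= x; lia.
Qed.

Lemma pow_lin c q : 0 < c -> 4 * c <= q -> c * q.+1 <= 2 ^ q.
Proof.
move=> c0; elim: q => [|q IH]; first by lia.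
rewrite leq_eqVlt => /orP[/eqP qc|]; last first.
  rewrite ltnS => /IH H; rewrite expnS; lia.
rewrite -qc; clear IH qc.
elim: c c0 => [//|c IH] _.
case: c IH => [|c] IH; first by [].
have := IH isT; rewrite !mulnS !expnD; lia.
Qed.

Lemma exp_mono a b e : a <= b -> a ^ e <= b ^ e.
Proof. by move=> ab; elim: e => [|e IH] //; rewrite !expnS leq_mul. Qed.

Lemma fact_le n : n`! <= n ^ n.
Proof.
elim: n => [|n IH] //; rewrite factS expnS leq_mul2l; apply/orP; right.
apply: leq_trans IH _; exact: exp_mono (leqnSn n).
Qed.

Lemma n_le_pow c n : 0 < c -> 4 * c * c <= n -> n <= 2 ^ (n %/ c).
Proof.
move=> c0 nb.
have q4 : 4 * c <= n %/ c by rewrite leq_divRL // mulnC.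
have := @pow_lin c (n %/ c) c0 q4.
have := ltn_ceil n c0.
lia.
Qed.

Lemma fact_pow c n : 0 < c -> 4 * c * c <= n -> n`! <= 2 ^ (n %/ c * n).
Proof.
move=> c0 nb; apply: leq_trans (fact_le n) _.
by rewrite expnM; apply: exp_mono; apply: n_le_pow.
Qed.

Lemma E1 K n : 0 < K ->
  let c := 128 * K * K in let r := n %/ c in let m := n %/ 4 in let s := m %/ K in
  16 * K + 8 <= s ->
  r + r * n + n <= 'C(s, 2).
Proof.
move=> K0 c r m s sb.
have c0 : 0 < c by rewrite /c; lia.
have hr : r * c <= n by apply: leq_trunc_div.
have hm : n < m.+1 * 4 by apply: ltn_ceil.
have hs : m < s.+1 * K by apply: ltn_ceil.
have hC := bin2_mul s.
have hn : n <= 4 * K * (s + 2).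
  lia.
have h1 : 32 * K * r <= s + 2.
  rewrite -(@leq_pmul2l (4 * K)); last by lia.
  apply: leq_trans hn; rewrite /c in hr. 
  lia.
have h2 : 8 * r * n <= (s + 2) * (s + 2).
  rewrite -(@leq_pmul2l (4 * K)); last by lia.
  have : 32 * K * r * n <= (s + 2) * n by apply: leq_mul.
  have : (s + 2) * n <= (s + 2) * (4 * K * (s + 2)) by apply: leq_mul.
  lia.
have h3 : (16 * K + 8) * s <= s * s by rewrite mulnC leq_mul2l sb orbT.
have hr2 : r <= s + 2.
  have : r <= K * r by rewrite leq_pmull.
  lia.
have hKs : 4 * K <= K * s by rewrite mulnC leq_mul2l; apply/orP; right; lia.
lia.
Qed.

Lemma E2 K n : 0 < K ->
  let c := 128 * K * K in let r := n %/ c in let m := n %/ 4 in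
  5 <= n -> r + r * n + n.+1 * m <= 'C(n, 2).
Proof.
move=> K0 c r m n5.
have hr : r * c <= n by apply: leq_trunc_div.
have hr' : 128 * r <= n.
  have KK : 1 <= K * K by rewrite muln_gt0 K0.
  have := leq_mul (leqnn (128 * r)) KK.
  rewrite /c in hr; lia.
have hm : m * 4 <= n by apply: leq_trunc_div.
have hC := bin2_mul n.
have a1 : n.+1 * (m * 4) <= n.+1 * n by rewrite leq_mul2l hm orbT.
have a2 : n * (128 * r) <= n * n by rewrite leq_mul2l hr' orbT.
have a3 : 5 * n <= n * n by rewrite mulnC leq_mul2l n5 orbT.
lia.
Qed.

Lemma F1 K n : 0 < K ->
  let c := 128 * K * K in let m := n %/ 4 in let s := m %/ K in
  4 * c * c <= n -> 16 * K + 8 <= s ->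
  n * n`! * 2 ^ n <= 2 ^ 'C(s, 2).
Proof.
move=> K0 c m s nb sb.
have c0 : 0 < c by rewrite /c; lia.
apply: leq_trans (_ : 2 ^ (n %/ c + n %/ c * n + n) <= _); last first.
  by apply: leq_pexp2l => //; apply: E1.
rewrite !expnD; apply: leq_mul => //; apply: leq_mul.
  exact: n_le_pow.
exact: fact_pow.
Qed.

Lemma pow_succ_le a b : (2 ^ a).+1 ^ b <= 2 ^ (a.+1 * b).
Proof.
rewrite expnM; apply: exp_mono.
by rewrite expnS mul2n -addnn -addn1 leq_add2l expn_gt0.
Qed.

Lemma F2 K n : 0 < K ->
  let c := 128 * K * K in let m := n %/ 4 in
  4 * c * c <= n -> 5 <= n ->
  n * n`! * (2 ^ n).+1 ^ m <= 2 ^ 'C(n, 2).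
Proof.
move=> K0 c m nb n5.
have c0 : 0 < c by rewrite /c; lia.
apply: leq_trans (_ : 2 ^ (n %/ c + n %/ c * n + n.+1 * m) <= _); last first.
  by apply: leq_pexp2l => //; apply: E2.
rewrite (expnD 2 (n %/ c + n %/ c * n)) (expnD 2 (n %/ c)).
apply: leq_mul; first apply: leq_mul.
- exact: n_le_pow.
- exact: fact_pow.
exact: pow_succ_le.
Qed.

Lemma final_nat (Q : graph_class) k n :
  (forall (T : finType) (e : rel T), is_graph e -> Q T e -> degenerate k e) ->
  4 * (128 * k.+1 * k.+1) * (128 * k.+1 * k.+1) + (16 * k.+1 + 8) * k.+1 * 4 + 5 <= n ->
  #|unique_classes Q n| * n <= 2 * #|iso_classes n|.
Proof.
move=> HQ nb.
set K := k.+1 in nb.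
have K0 : 0 < K by [].
set m := n %/ 4.
set s := m %/ K.
have sb : 16 * K + 8 <= s.
  by rewrite /s /m !leq_divRL //; lia.
have hU := unique_le Q n m.
have hB := bad_le n HQ (leq_trunc_div m K : s * k.+1 <= m).
have hG := graphs_le n.
have hE := graphs_lb n.
have f1 := @F1 K n K0 ltac:(lia) sb.
have f2 := @F2 K n K0 ltac:(lia) ltac:(lia).
rewrite -/m -/s in f1 f2 hB.
set U := #|unique_classes Q n| in hU *.
set I := #|iso_classes n| in hG *.
set G := #|graphs n| in hB hG hE *.
set Bd := #|Bad Q n m| in hU hB.
set a := n`! in hG f1 f2.
set x := 2 ^ 'C(s, 2) in hB f1.
set y := 2 ^ n in hB f1.
set P := (y.+1) ^ m in hU f2.
set E := 2 ^ 'C(n, 2) in hE f2.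
have ax : 0 < a * x by rewrite muln_gt0 fact_gt0 expn_gt0.
rewrite -(leq_pmul2r ax).
have s1 : U * n * (a * x) <= (Bd + P) * n * (a * x) by rewrite !leq_mul2r hU !orbT.
have s2 : Bd * x * (n * a) <= y * G * (n * a) by apply: leq_mul.
have s3 : n * a * P * x <= E * x by apply: leq_mul.
have s4 : G * (n * a * y) <= G * x by apply: leq_mul.
have s5 : E * x <= G * x by apply: leq_mul.
have s6 : G * x <= a * I * x by apply: leq_mul.
lia.
Qed.

Theorem corollary1 (k : nat) (Q : graph_class) :
  iso_closed Q ->
  (forall (T : finType) (e : rel T), is_graph e -> Q T e -> degenerate k e) ->
  weakly_distinguishing Q.
Proof.
move=> _ HQ eps eps0.
set N0 := 4 * (128 * k.+1 * k.+1) * (128 * k.+1 * k.+1) + (16 * k.+1 + 8) * k.+1 * 4 + 5.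
have b0 : (0 <= 2 / eps)%R by rewrite divr_ge0 // ltW.
set N1 := Num.Def.archi_bound (2 / eps).
exists (N0 + N1) => n nN.
have hN := final_nat HQ (leq_trans (leq_addr N1 N0) nN).
have n0 : 0 < n by apply: leq_trans nN; rewrite /N0; lia.
have I0 : 0 < #|iso_classes n|.
  have := leq_trans (graphs_lb n) (graphs_le n).
  by rewrite lt0n; apply: contraTneq => ->; rewrite muln0 leqn0 expn_eq0.
have hn : (2 / eps < n%:R)%R.
  apply: lt_le_trans (archi_boundP b0) _; rewrite ler_nat.
  by apply: leq_trans nN; rewrite leq_addl.
have hn' : (2 < eps * n%:R)%R by rewrite mulrC -ltr_pdivrMr.
have hR : ((#|unique_classes Q n|%:R : rat) * n%:R <= 2 * #|iso_classes n|%:R)%R.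
  by rewrite -natrM -(natrM _ 2) ler_nat.
have I0' : (0 < (#|iso_classes n|%:R : rat))%R by rewrite ltr0n.
have n0' : (0 < (n%:R : rat))%R by rewrite ltr0n.
have U0 : (0 <= (#|unique_classes Q n|%:R : rat))%R by rewrite ler0n.
rewrite ltr_pdivrMr //.
nra.
Qed.
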